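(* Let $n\ge 1$ and let $\epsilon_0,\epsilon_1,\ldots,\epsilon_n$ be real numbers with $0<\epsilon_i\le 1$ for $i=0,1,\ldots,n$. Then for every symmetric pseudo-Boolean function $f:\{0,1\}^n\to\mathbb{R}$ there exists a unique vector $(\alpha_0,\alpha_1,\ldots,\alpha_n)\in\mathbb{R}^{n+1}$ such that \[ f(x)=\sum_{i=0}^{n}\alpha_i\,\min\Bigl(0,\; i-\epsilon_i-\sum_{r=1}^n x_r\Bigr)\quad\text{for all }x\in\{0,1\}^n. \]
   Context: A pseudo-Boolean function is a map $f:\{0,1\}^n\to\mathbb{R}$. It is symmetric if its value depends only on the Hamming weight $|x|=\sum_{j=1}^n x_j$ of $x$, i.e. there is $k:\{0,1,\ldots,n\}\to\mathbb{R}$ with $f(x)=k(|x|)$ for all $x$. *)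

(* Defs.v *)
(* Reals are rendered as an arbitrary realFieldType R
   (the statement is purely order-algebraic). *)
From HB Require Import structures.
From mathcomp Require Import all_boot all_order all_algebra.
Set Implicit Arguments. Unset Strict Implicit. Unset Printing Implicit Defensive.
Import Order.TTheory GRing.Theory Num.Theory.
Local Open Scope ring_scope.

Definition hamming (n : nat) (x : {ffun 'I_n -> bool}) : nat :=
  (\sum_(r < n) nat_of_bool (x r))%N.

Definition symmetric_pb (R : Type) (n : nat) (f : {ffun 'I_n -> bool} -> R) : Prop :=
  exists k : nat -> R, forall x, f x = k (hamming x).

(* Main.v *)
Require Import Defs.
From HB Require Import structures.
From mathcomp Require Import all_boot all_order all_algebra.
Import Order.TTheory GRing.Theory Num.Theory.
Local Open Scope ring_scope.

Lemma hamming_le n (x : {ffun 'I_n -> bool}) : (hamming x <= n)%N.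
Proof.
rewrite /hamming -[X in (_ <= X)%N]card_ord -sum1_card.
by apply: leq_sum => i _; case: (x i).
Qed.

Lemma hamming_ex n w : (w <= n)%N ->
  hamming [ffun r : 'I_n => (r < w)%N] = w.
Proof.
move=> hw; rewrite /hamming.
under eq_bigr => r _ do rewrite ffunE.
rewrite -(big_mkord xpredT (fun r => nat_of_bool (r < w)%N)).
rewrite (@big_cat_nat _ _ _ w 0 n _ _ (leq0n w) hw) /=.
rewrite (@eq_big_nat _ _ _ 0 w _ (fun _ => 1%N)); last by move=> i /andP[_ ->].
rewrite (@eq_big_nat _ _ _ w n _ (fun _ => 0%N)); last first.
  by move=> i /andP[hi _]; rewrite ltnNge hi.
by rewrite sum_nat_const_nat big1_eq subn0 muln1 addn0.
Qed.

Theorem theorem1 (R : realFieldType) (n : nat) (hn : (1 <= n)%N)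
  (eps : 'I_n.+1 -> R) (heps : forall i, 0 < eps i /\ eps i <= 1)
  (f : {ffun 'I_n -> bool} -> R) (hf : symmetric_pb f) :
  exists! alpha : 'rV[R]_n.+1,
    forall x : {ffun 'I_n -> bool},
      f x = \sum_(i < n.+1)
              alpha 0 i * Num.min 0 ((i : nat)%:R - eps i - (hamming x)%:R).
Proof.
case: hf => k hk.
pose M : 'M[R]_n.+1 := \matrix_(w, i) Num.min 0 ((i : nat)%:R - eps i - (w : nat)%:R).
pose kv : 'rV[R]_n.+1 := \row_(w < n.+1) k w.
have trig : is_trig_mx M.
  apply/forallP => w; apply/forallP => i; apply/implyP => hwi.
  rewrite mxE; apply/eqP/min_l.
  have [e0 e1] := heps i.
  rewrite subr_ge0 lerBrDl.
  apply: (le_trans (y := 1 + (w : nat)%:R)); first by rewrite lerD2r.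
  by rewrite addrC natr1 ler_nat.
have Mu : M^T \in unitmx.
  rewrite unitmx_tr unitmxE det_trig //.
  suff H : \prod_(i < n.+1) M i i != 0 by rewrite unitfE.
  apply/prodf_neq0 => i _; rewrite mxE.
  have [e0 e1] := heps i.
  rewrite addrAC subrr add0r min_r; first by rewrite oppr_eq0 lt0r_neq0.
  by rewrite oppr_le0 ltW.
have key : forall beta : 'rV[R]_n.+1,
    (forall x : {ffun 'I_n -> bool},
      f x = \sum_(i < n.+1)
              beta 0 i * Num.min 0 ((i : nat)%:R - eps i - (hamming x)%:R))
    <-> beta *m M^T = kv.
  move=> beta; split.
    move=> H; apply/rowP => w; rewrite !mxE.
    have hw : (w <= n)%N by rewrite -ltnS.
    have := H [ffun r : 'I_n => (r < w)%N].
    rewrite hk hamming_ex // => ->.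
    by apply: eq_bigr => i _; rewrite !mxE.
  move=> H x; rewrite hk.
  have hw := @hamming_le n x.
  have := congr1 (fun A : 'rV[R]_n.+1 => A 0 (inord (hamming x))) H.
  rewrite /= !mxE inordK ?ltnS // => <-.
  by apply: eq_bigr => i _; rewrite !mxE inordK ?ltnS.
exists (kv *m invmx M^T); split.
  by apply/key; rewrite mulmxKV.
move=> beta /key <-; by rewrite mulmxK.
Qed.
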